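(* Let $M,N\ge1$ be integers and let $f_0,\ldots,f_{K-1}$, $K\ge2$, be distinct functions $\mathbb{Z}_M\to\mathbb{Z}_N$. Let $\delta_{\min}$ be the minimum over all pairs $j\neq j'$ of the number of $x\in\mathbb{Z}_M$ with $f_j(x)\neq f_{j'}(x)$, and assume $\delta_{\min}<M$. If $C$ is a positive integer with $$C>\frac{\ln(K-1)}{\ln M-\ln(M-\delta_{\min})},$$ then the $C$-fold tensor powers $U_{f_0}^{\otimes C},\ldots,U_{f_{K-1}}^{\otimes C}$ of the standard oracle operators are unambiguously distinguishable.
   Context: For $f:\mathbb{Z}_M\to\mathbb{Z}_N$ the standard oracle operator is the unitary $U_f$ on $\mathcal{H}_M\otimes\mathcal{H}_N$ (with orthonormal bases $\{|x\rangle\}_{x\in\mathbb{Z}_M}$, $\{|y\rangle\}_{y\in\mathbb{Z}_N}$) given by $U_f|x\rangle\otimes|y\rangle=|x\rangle\otimes|y\oplus f(x)\rangle$, $\oplus$ being addition mod $N$; $U_f^{\otimes C}$ acts on $(\mathcal{H}_M\otimes\mathcal{H}_N)^{\otimes C}$ (parallel calls on separate registers). A finite list of unitary operators $W_1,\ldots,W_K$ on a finite-dimensional Hilbert space $\mathcal{H}$ is called unambiguously distinguishable if there exist a finite-dimensional ancilla space $\mathcal{H}_A$ and a unit vector $|\psi\rangle\in\mathcal{H}\otimes\mathcal{H}_A$ such that the vectors $(W_j\otimes\mathbb{1}_A)|\psi\rangle$ are linearly independent. *)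

(* Defs.v *)
From HB Require Import structures.
From mathcomp Require Import all_boot all_order all_algebra.
From Stdlib Require Import Reals.
Set Implicit Arguments. Unset Strict Implicit. Unset Printing Implicit Defensive.
Import Order.TTheory GRing.Theory Num.Theory.
Local Open Scope ring_scope.

(* Operators on a finite-dimensional Hilbert space with orthonormal basis
   indexed by a finite type I, given by their matrix elements
   W i j = <i| W |j>; vectors are coefficient functions I -> Cx. *)
Section Ops.
Variable Cx : numClosedFieldType.

Definition apply_op (I : finType) (W : I -> I -> Cx) (v : I -> Cx) : I -> Cx :=
  fun i => \sum_(j : I) W i j * v j.

Definition tens_pow (I : finType) (C : nat) (W : I -> I -> Cx) :
  {ffun 'I_C -> I} -> {ffun 'I_C -> I} -> Cx :=
  fun xs ys => \prod_(c < C) W (xs c) (ys c).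

Definition tens_id (I : finType) (d : nat) (W : I -> I -> Cx) :
  (I * 'I_d)%type -> (I * 'I_d)%type -> Cx :=
  fun p q => W p.1 q.1 * (p.2 == q.2)%:R.

Definition unit_vec (I : finType) (v : I -> Cx) : Prop :=
  \sum_(i : I) `|v i| ^+ 2 = 1.

Definition lin_indep (I : finType) (K : nat) (v : 'I_K -> I -> Cx) : Prop :=
  forall c : 'I_K -> Cx,
    (forall i : I, \sum_(k < K) c k * v k i = 0) -> forall k, c k = 0.

Definition unamb_dist (I : finType) (K : nat) (W : 'I_K -> I -> I -> Cx) : Prop :=
  exists d : nat, exists psi : (I * 'I_d)%type -> Cx,
    unit_vec psi /\ lin_indep (fun k => apply_op (@tens_id I d (W k)) psi).
End Ops.

Lemma ord_pos N (y : 'I_N) : leq 1 N.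
Proof. exact: leq_ltn_trans (leq0n y) (ltn_ord y). Qed.

Definition addI N (y z : 'I_N) : 'I_N := Ordinal (ltn_pmod (y + z) (ord_pos y)).

(* standard oracle U_f |x> (x) |y> = |x> (x) |y (+) f x>, basis of
   H_M (x) H_N indexed by 'I_M * 'I_N *)
Definition oracle (Cx : numClosedFieldType) M N (f : 'I_M -> 'I_N) :
  ('I_M * 'I_N)%type -> ('I_M * 'I_N)%type -> Cx :=
  fun p q => ((p.1 == q.1) && (p.2 == addI q.2 (f q.1)))%:R.

Definition hdist M N (f g : 'I_M -> 'I_N) : nat := #|[pred x | f x != g x]|.

(* minimum over pairs j <> j' of hdist (f j) (f j'); the default M is never
   smaller than an actual value, so for K >= 2 this is the true minimum *)
Definition delta_min M N K (f : 'I_K -> 'I_M -> 'I_N) : nat :=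
  \big[minn/M]_(j < K) \big[minn/M]_(j' < K | j != j') hdist (f j) (f j').

(* Main.v *)
Require Import Defs.
From HB Require Import structures.
From mathcomp Require Import all_boot all_order all_algebra.
From Stdlib Require Import Reals.
From mathcomp Require Import zify.
From Stdlib Require Import Lra FunctionalExtensionality.
Set Implicit Arguments. Unset Strict Implicit. Unset Printing Implicit Defensive.
Import Order.TTheory GRing.Theory Num.Theory.
Local Open Scope ring_scope.

Lemma core (Cx : numClosedFieldType) M N K (f : 'I_K -> 'I_M -> 'I_N) (C d : nat)
  (c : 'I_K -> Cx) :
  (0 < C)%nat -> (forall j j' : 'I_K, j != j' -> (d <= hdist (f j) (f j'))%nat) ->
  (K.-1 * expn (M - d) C < expn M C)%nat ->
  (forall (x : {ffun 'I_C -> 'I_M}) k',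
     \sum_k c k * ([forall i, f k (x i) == f k' (x i)])%:R = 0) ->
  forall k, c k = 0.
Proof.
move=> hC hd hlt hc k0; apply/eqP; apply/negPn/negP => ck0.
pose A k := [set x : {ffun 'I_C -> 'I_M} | [forall i, f k (x i) == f k0 (x i)]].
have cover : forall x, exists2 k, k != k0 & x \in A k.
  move=> x; apply/exists_inP; apply/contraT; rewrite negb_exists_in => /forall_inP H.
  suff: c k0 == 0 by rewrite (negbTE ck0).
  apply/eqP; move: (hc x k0).
  rewrite (bigD1 k0) //= big1 ?addr0.
    by rewrite (_ : [forall i, _] = true) ?mulr1 //; apply/forallP.
  move=> k nk; have := H k; rewrite nk inE => /(_ isT) /negbTE ->; by rewrite mulr0.
have cardA : forall k, k != k0 -> (#|A k| <= expn (M - d) C)%nat.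
  move=> k nk.
  have -> : A k = [set x | x \in ffun_on [pred y | f k y == f k0 y]].
    apply/setP => x; rewrite !inE; apply/forallP/ffun_onP => H i; exact: H.
  rewrite cardsE card_ffun_on card_ord leq_exp2r //.
  have E := cardC [pred y | f k y == f k0 y]; rewrite card_ord in E.
  have : (d <= #|[predC [pred y | f k y == f k0 y]]|)%nat.
    apply: leq_trans (hd k k0 nk) _; rewrite /hdist; apply: subset_leq_card.
    by apply/subsetP => y; rewrite !inE.
  move=> h; by rewrite -[X in (_ <= X - _)%nat]E -addnBA // leq_addr.
have : (expn M C <= K.-1 * expn (M - d) C)%nat.
  have -> : expn M C = #|{ffun 'I_C -> 'I_M}| by rewrite card_ffun !card_ord.
  rewrite -sum1_card.
  apply: (@leq_trans (\sum_x \sum_(k | k != k0) nat_of_bool (x \in A k))).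
    apply: leq_sum => x _; case: (cover x) => k nk xA.
    by rewrite (bigD1 k) //= xA.
  rewrite exchange_big /=.
  apply: (@leq_trans (\sum_(k | k != k0) expn (M - d) C)).
    apply: leq_sum => k nk.
    rewrite (eq_bigr (fun x => if x \in A k then 1 else 0)%nat); last first.
      by move=> x _; case: (x \in A k).
    by rewrite -big_mkcond sum1_card cardA.
  by rewrite sum_nat_const cardC1 card_ord.
move=> h; lia.
Qed.

Lemma INR_expn m n : INR (expn m n) = (INR m ^ n)%R.
Proof.
elim: n => [|n IH]; first by rewrite expn0.
by rewrite expnS mulnE mult_INR IH.
Qed.

Lemma real_part (K M C d : nat) :
  (2 <= K)%nat -> (0 < d)%nat -> (d < M)%nat ->
  (INR C > ln (INR (K - 1)) / (ln (INR M) - ln (INR (M - d))))%R ->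
  (K.-1 * expn (M - d) C < expn M C)%nat.
Proof.
move=> K2 d1 dM hR.
have Ha : (0 < INR (K - 1))%R by apply: lt_0_INR; lia.
have Hr : (0 < INR (M - d))%R by apply: lt_0_INR; lia.
have HrM : (INR (M - d) < INR M)%R by apply: lt_INR; lia.
have D : (0 < ln (INR M) - ln (INR (M - d)))%R.
  have := ln_increasing _ _ Hr HrM; lra.
have H1 : (ln (INR (K - 1)) < INR C * (ln (INR M) - ln (INR (M - d))))%R.
  have -> : ln (INR (K - 1)) =
     (ln (INR (K - 1)) / (ln (INR M) - ln (INR (M - d))) * (ln (INR M) - ln (INR (M - d))))%R.
    by field; lra.
  by apply: Rmult_lt_compat_r.
have H2 : (INR (K - 1) * INR (M - d) ^ C < INR M ^ C)%R.
  apply: ln_lt_inv.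
  - by apply: Rmult_lt_0_compat => //; apply: pow_lt.
  - by apply: pow_lt; lra.
  rewrite ln_mult //; last by apply: pow_lt.
  rewrite !ln_pow //; lra.
rewrite -subn1; apply/ssrnat.ltP; apply: INR_lt.
by rewrite mulnE mult_INR !INR_expn.
Qed.

Lemma prod_bool (Cx : numClosedFieldType) (I : finType) (P : I -> bool) :
  \prod_i ((P i)%:R : Cx) = ([forall i, P i])%:R.
Proof.
case: (boolP [forall i, P i]) => [/forallP H | /forallPn [i Hi]].
  by rewrite big1 // => i _; rewrite H.
by rewrite (bigD1 i) //= (negbTE Hi) mul0r.
Qed.

Lemma apply_psi (Cx : numClosedFieldType) (T : finType) (W : T -> T -> Cx) (s : Cx) i a :
  apply_op (tens_id W) (fun q : T * 'I_#|T| => s * (enum_rank q.1 == q.2)%:R) (i, a)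
  = s * W i (enum_val a).
Proof.
rewrite /apply_op /tens_id (bigD1 (enum_val a, a)) //= big1 ?addr0.
  by rewrite enum_valK !eqxx !mulr1 mulrC.
move=> [j b] /= ne; case: (eqVneq a b) => [eab|nab]; last first.
  by rewrite mulr0 mul0r.
subst b; rewrite mulr1.
have -> : (enum_rank j == a) = false.
  apply/negbTE; apply: contra ne => /eqP <-; by rewrite enum_rankK.
by rewrite mulr0 mulr0.
Qed.

Lemma bigmin_le (I : eqType) (r : seq I) (P : pred I) (F : I -> nat) m j :
  j \in r -> P j -> (\big[minn/m]_(i <- r | P i) F i <= F j)%nat.
Proof.
elim: r => // x r IH; rewrite in_cons big_cons => /orP [/eqP <-|jr] Pj.
  by rewrite Pj geq_minl.
case: (P x); last exact: IH.
exact: leq_trans (geq_minr _ _) (IH jr Pj).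
Qed.

Lemma addI0 N (z0 y : 'I_N) : nat_of_ord z0 = 0%nat -> addI z0 y = y.
Proof. by move=> h; apply: val_inj; rewrite /= h add0n modn_small. Qed.

Theorem mainTheorem12 (Cx : numClosedFieldType) (M N K : nat)
  (f : 'I_K -> 'I_M -> 'I_N) (C : nat) :
  leq 1 M -> leq 1 N -> leq 2 K ->
  (forall j j' : 'I_K, j <> j' -> f j <> f j') ->
  leq (delta_min f).+1 M ->
  leq 1 C ->
  (INR C > ln (INR (K - 1)) / (ln (INR M) - ln (INR (M - delta_min f))))%R ->
  unamb_dist (fun k : 'I_K => @tens_pow Cx _ C (@oracle Cx M N (f k))).
Proof.
move=> M1 N1 K2 fdist dM C1 hR.
have hd : forall j j' : 'I_K, j != j' -> (delta_min f <= hdist (f j) (f j'))%nat.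
  move=> j j' jj'; rewrite /delta_min.
  apply: leq_trans (bigmin_le _ _ (mem_index_enum j) isT) _.
  exact: bigmin_le (mem_index_enum j') jj'.
have d1 : (0 < delta_min f)%nat.
  rewrite /delta_min; apply: (big_ind (fun n => 0 < n)%nat) => //.
    by move=> a b ha hb; rewrite leq_min ha hb.
  move=> j _; apply: (big_ind (fun n => 0 < n)%nat) => //.
    by move=> a b ha hb; rewrite leq_min ha hb.
  move=> j' jj'; rewrite /hdist.
  case: (boolP [exists x, f j x != f j' x]) => [/existsP[x hx]| /existsPn H].
    by apply/card_gt0P; exists x; rewrite inE.
  exfalso; apply: (fdist j j'); first by apply/eqP.
  apply: functional_extensionality => x; apply/eqP; move: (H x); by rewrite negbK.
have hlt := real_part K2 d1 dM hR.
pose T := {ffun 'I_C -> ('I_M * 'I_N)%type}.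
have z0N : (0 < N)%nat by [].
pose z0 : 'I_N := Ordinal z0N.
have T0 : (0 < #|T|)%nat.
  by apply/card_gt0P; exists [ffun _ => (Ordinal M1, z0)].
pose s : Cx := (sqrtC (#|T|%:R))^-1.
have n0 : (#|T|%:R : Cx) != 0 by rewrite pnatr_eq0 -lt0n.
have s0 : s != 0 by rewrite invr_eq0 sqrtC_eq0.
exists #|T|; exists (fun q : T * 'I_#|T| => s * (enum_rank q.1 == q.2)%:R).
split.
  rewrite /unit_vec -(pair_bigA _ (fun j a => `|s * (enum_rank j == a)%:R| ^+ 2)) /=.
  rewrite (eq_bigr (fun _ => `|s| ^+ 2)); last first.
    move=> j _; rewrite (bigD1 (enum_rank j)) //= eqxx mulr1 big1 ?addr0 //.
    by move=> a na; rewrite eq_sym (negbTE na) mulr0 normr0 expr0n.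
  rewrite sumr_const normfV ger0_norm ?sqrtC_ge0 ?ler0n //.
  rewrite exprVn sqrtCK -[X in X *+ _]mulr1 -mulrnAr; exact: mulVf n0.
move=> c hc.
apply: (core C1 hd hlt) => x k'.
pose t : T := [ffun c0 => (x c0, z0)].
pose i : T := [ffun c0 => (x c0, addI z0 (f k' (x c0)))].
have := hc (i, enum_rank t).
rewrite (eq_bigr (fun k => s * (c k * [forall i0, f k (x i0) == f k' (x i0)]%:R))); last first.
  move=> k _; rewrite apply_psi enum_rankK mulrCA; congr (_ * (_ * _)).
  rewrite /tens_pow -prod_bool; apply: eq_bigr => c0 _.
  rewrite /oracle !ffunE /= eqxx /= !addI0 //; by rewrite eq_sym.
by rewrite -mulr_sumr => /eqP; rewrite mulf_eq0 (negbTE s0) /= => /eqP.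
Qed.
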